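(* Let $\Phi:\{0,1\}^n\to\{0,1\}^n$, let $\mu\in\{0,1\}^n$ be a fixed point of $\Phi$, and let $\rho\in P_n$. Then $\overline{W}(\mu)=\overline{W}[\Phi^\rho(\mu,\cdot)]=\overline{W}[\omega_\rho(\mu)]$ and $\underline{W}(\mu)=\underline{W}[\Phi^\rho(\mu,\cdot)]=\underline{W}[\omega_\rho(\mu)]$.
   Context: Let $\mathbf{B}=\{0,1\}$ (discrete topology), $n\ge1$, $\Phi:\mathbf{B}^n\to\mathbf{B}^n$. For $\nu\in\mathbf{B}^n$: $\Phi^\nu_i(\mu)=\mu_i$ if $\nu_i=0$, $=\Phi_i(\mu)$ if $\nu_i=1$; $\Phi^{\alpha^0\dots\alpha^k}=\Phi^{\alpha^k}\circ\cdots\circ\Phi^{\alpha^0}$. A sequence $(\alpha^k)_{k\in\mathbf{N}}$ in $\mathbf{B}^n$ is progressive if each $\{k:\alpha^k_i=1\}$ is infinite. $Seq$ = strictly increasing real sequences unbounded above. $P_n$ = functions $\rho:\mathbf{R}\to\mathbf{B}^n$ with $\rho(t_k)=\alpha^k$, $\rho(t)=0$ for $t\notin\{t_k\}$, $\alpha$ progressive, $(t_k)\in Seq$. Orbit: $\Phi^\rho(\mu,t)=\mu$ for $t<t_0$, $=\Phi^{\alpha^0\dots\alpha^k}(\mu)$ for $t\in[t_k,t_{k+1})$. $\omega_\rho(\mu)=\{\mu':\exists(s_k)\in Seq,\ \Phi^\rho(\mu,s_k)=\mu'$ for all large $k\}$. $\overline{W}(\mu)=\{\mu':\exists\rho'\in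 P_n,\ \omega_{\rho'}(\mu')\subset\{\mu\}\}$, $\underline{W}(\mu)=\{\mu':\forall\rho'\in P_n,\ \omega_{\rho'}(\mu')\subset\{\mu\}\}$. Basins: $\overline{W}[\Phi^\rho(\mu,\cdot)]=\{\mu':\exists\rho'\in P_n,\exists t',\forall t\ge t',\ \Phi^{\rho'}(\mu',t)=\Phi^\rho(\mu,t)\}$, $\underline{W}[\Phi^\rho(\mu,\cdot)]=\{\mu':\forall\rho'\in P_n,\exists t',\forall t\ge t',\ \Phi^{\rho'}(\mu',t)=\Phi^\rho(\mu,t)\}$, $\overline{W}[\omega_\rho(\mu)]=\{\mu':\exists\rho'\in P_n,\ \omega_{\rho'}(\mu')=\omega_\rho(\mu)\}$, $\underline{W}[\omega_\rho(\mu)]=\{\mu':\forall\rho'\in P_n,\ \omega_{\rho'}(\mu')=\omega_\rho(\mu)\}$. *)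

(* Defs.v *)
From mathcomp Require Import all_boot.
From Stdlib Require Import Reals ClassicalEpsilon.

Set Implicit Arguments.
Unset Strict Implicit.
Unset Printing Implicit Defensive.

Definition state (n : nat) := {ffun 'I_n -> bool}.

Section Defs.
Variable n : nat.
Variable Phi : state n -> state n.

Definition phi_nu (nu : state n) (mu : state n) : state n :=
  [ffun i => if nu i then Phi mu i else mu i].

Definition progressive (alpha : nat -> state n) : Prop :=
  forall i : 'I_n, forall N : nat, exists k : nat, (N <= k)%coq_nat /\ alpha k i = true.

Definition Seq (t : nat -> R) : Prop :=
  (forall k, (t k < t (S k))%R) /\ (forall M : R, exists k, (M < t k)%R).

(* the element of P_n determined by (alpha, t) *)
Definition rho_of (alpha : nat -> state n) (t : nat -> R) (s : R) : state n :=
  match excluded_middle_informative (exists k, s = t k) with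
  | left H => alpha (epsilon (inhabits 0%nat) (fun k => s = t k))
  | right _ => [ffun _ => false]
  end.

Fixpoint run (alpha : nat -> state n) (mu : state n) (k : nat) : state n :=
  match k with
  | O => mu
  | S k' => phi_nu (alpha k') (run alpha mu k')
  end.

(* orbit Phi^rho(mu, s) for rho given by (alpha, t):
   mu for s < t_0, Phi^{alpha^0..alpha^k}(mu) for s in [t_k, t_{k+1}) *)
Definition orbit (alpha : nat -> state n) (t : nat -> R) (mu : state n) (s : R)
  : state n :=
  if Rlt_dec s (t 0%nat) then mu
  else run alpha mu
         (S (epsilon (inhabits 0%nat) (fun k => (t k <= s < t (S k))%R))).

Definition omega (alpha : nat -> state n) (t : nat -> R) (mu : state n)
  : state n -> Prop :=
  fun mu' => exists s : nat -> R, Seq s /\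
    exists K : nat, forall k, (K <= k)%coq_nat -> orbit alpha t mu (s k) = mu'.

(* membership in P_n, via a representation (alpha, t) *)
Definition Pn (alpha : nat -> state n) (t : nat -> R) : Prop :=
  progressive alpha /\ Seq t.

Definition Wbar (mu : state n) : state n -> Prop :=
  fun mu' => exists alpha' t', Pn alpha' t' /\
    forall x, omega alpha' t' mu' x -> x = mu.
Definition Wund (mu : state n) : state n -> Prop :=
  fun mu' => forall alpha' t', Pn alpha' t' ->
    forall x, omega alpha' t' mu' x -> x = mu.

Definition Wbar_orbit (alpha : nat -> state n) (t : nat -> R) (mu : state n)
  : state n -> Prop :=
  fun mu' => exists alpha' t'', Pn alpha' t'' /\
    exists t0 : R, forall s, (t0 <= s)%R -> orbit alpha' t'' mu' s = orbit alpha t mu s.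
Definition Wund_orbit (alpha : nat -> state n) (t : nat -> R) (mu : state n)
  : state n -> Prop :=
  fun mu' => forall alpha' t'', Pn alpha' t'' ->
    exists t0 : R, forall s, (t0 <= s)%R -> orbit alpha' t'' mu' s = orbit alpha t mu s.

Definition Wbar_omega (alpha : nat -> state n) (t : nat -> R) (mu : state n)
  : state n -> Prop :=
  fun mu' => exists alpha' t', Pn alpha' t' /\
    forall x, omega alpha' t' mu' x <-> omega alpha t mu x.
Definition Wund_omega (alpha : nat -> state n) (t : nat -> R) (mu : state n)
  : state n -> Prop :=
  fun mu' => forall alpha' t', Pn alpha' t' ->
    forall x, omega alpha' t' mu' x <-> omega alpha t mu x.

End Defs.

(* Main.v *)
Require Import Defs.
From mathcomp Require Import all_boot.
From Stdlib Require Import Reals Lra ClassicalEpsilon Classical Lia.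

Definition omegaF {T : Type} (f : R -> T) (x : T) : Prop :=
  exists s : nat -> R, Seq s /\
    exists K : nat, forall k, (K <= k)%coq_nat -> f (s k) = x.

Lemma nat_unb (M : R) : exists k : nat, (M < INR k)%R.
Proof.
  destruct (INR_archimed 1 M) as [k Hk]; [lra|]. exists k. lra.
Qed.

Lemma seq_mono (s : nat -> R) : Seq s -> forall a b, (a <= b)%coq_nat -> (s a <= s b)%R.
Proof.
  intros [Hi _] a b Hab. induction Hab; [lra|]. specialize (Hi m). lra.
Qed.

Lemma ev_sub (T : Type) (f : R -> T) (mu : T) :
  (exists t0, forall s, (t0 <= s)%R -> f s = mu) -> forall x, omegaF f x -> x = mu.
Proof.
  intros [t0 H] x [s [Hs [K HK]]].
  destruct (proj2 Hs t0) as [k0 Hk0].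
  rewrite <- (HK (Nat.max K k0)) by lia.
  apply H. pose proof (@seq_mono s Hs k0 (Nat.max K k0) ltac:(lia)). lra.
Qed.

Lemma ev_in (T : Type) (f : R -> T) (mu : T) :
  (exists t0, forall s, (t0 <= s)%R -> f s = mu) -> omegaF f mu.
Proof.
  intros [t0 H]. exists (fun k => t0 + INR k)%R. split.
  - split.
    + intro k. rewrite S_INR. lra.
    + intro M. destruct (nat_unb (M - t0)) as [k Hk]. exists k. lra.
  - exists 0%nat. intros k _. apply H. pose proof (pos_INR k). lra.
Qed.

Lemma list_bound (T : eqType) (f : R -> T) (mu : T) (l : seq T) :
  (forall x, x \in l -> x <> mu -> exists M, forall s, (M < s)%R -> f s <> x) ->
  exists M, forall s, (M < s)%R -> forall x, x \in l -> x <> mu -> f s <> x.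
Proof.
  elim: l => [|a l IH] H.
  - exists 0%R. by move=> s _ x.
  - have [M1 H1] : exists M, forall s, (M < s)%R -> forall x, x \in l -> x <> mu -> f s <> x.
      apply: IH => x xl; apply: H; by rewrite inE xl orbT.
    destruct (classic (a = mu)) as [Ha|Ha].
    + exists M1 => s Hs x; rewrite inE => /orP [/eqP -> //|xl]; exact: H1.
    + have [M2 H2] := H a (mem_head _ _) Ha.
      exists (Rmax M1 M2) => s Hs x; rewrite inE => /orP [/eqP ->|xl] Hx.
      * apply: H2. pose proof (Rmax_r M1 M2). lra.
      * apply: H1 => //. pose proof (Rmax_l M1 M2). lra.
Qed.

Lemma sub_ev (T : finType) (f : R -> T) (mu : T) :
  (forall x, omegaF f x -> x = mu) -> (exists t0, forall s, (t0 <= s)%R -> f s = mu).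
Proof.
  intro H.
  destruct (classic (exists x, x <> mu /\ forall M, exists s, (M < s)%R /\ f s = x))
    as [[x [Hx Hu]]|Hn].
  - exfalso. apply Hx. apply H.
    pose g' := fun M => proj1_sig (constructive_indefinite_description _ (Hu M)).
    assert (Hg : forall M, (M < g' M)%R /\ f (g' M) = x)
      by (intro M; exact (proj2_sig (constructive_indefinite_description _ (Hu M)))).
    clearbody g'.
    pose (sq := fix sq (k : nat) : R :=
      match k with O => g' 0%R | S k' => g' (Rmax (sq k') (INR (S k'))) end).
    assert (Hgt : forall k, (INR k < sq k)%R).
    { intros [|k].
      - destruct (Hg 0%R) as [A _]. change (INR 0 < g' 0)%R. simpl INR. lra.
      - destruct (Hg (Rmax (sq k) (INR (S k)))) as [A _].
        change (INR (S k) < g' (Rmax (sq k) (INR (S k))))%R.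
        pose proof (Rmax_r (sq k) (INR (S k))). lra. }
    exists sq. split; [split|].
    + intro k. change (sq k < g' (Rmax (sq k) (INR (S k))))%R. destruct (Hg (Rmax (sq k) (INR (S k)))) as [A _].
      pose proof (Rmax_l (sq k) (INR (S k))). lra.
    + intro M. destruct (nat_unb M) as [k Hk]. exists k. specialize (Hgt k). lra.
    + exists 0%nat. intros [|k] _; simpl; apply Hg.
  - have [M HM] := @list_bound T f mu (enum T) (fun x _ Hx =>
      ltac:(apply NNPP; intro Hc; apply Hn; exists x; split; [exact Hx|];
            intro M; apply NNPP; intro Hc2; apply Hc; exists M; intros s Hs Hfs;
            apply Hc2; exists s; split; assumption)).
    exists (M + 1)%R => s Hs.
    apply NNPP => Hc. apply: (HM s _ (f s) _ Hc) => //; [lra|by rewrite mem_enum].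
Qed.

Lemma run_fix n (Phi : state n -> state n) mu (hfix : Phi mu = mu) alpha k :
  run Phi alpha mu k = mu.
Proof.
  elim: k => [//|k IH] /=. rewrite IH. apply/ffunP => i. rewrite ffunE hfix.
  by case: (alpha k i).
Qed.

Lemma orbit_fix n (Phi : state n -> state n) mu (hfix : Phi mu = mu) alpha t s :
  Defs.orbit Phi alpha t mu s = mu.
Proof. rewrite /Defs.orbit. destruct (Rlt_dec _ _); [reflexivity|exact (run_fix _ _ _ hfix _ _)]. Qed.

Arguments orbit_fix {n Phi mu} hfix alpha t s.
Arguments ev_sub {T f mu}.
Arguments ev_in {T f mu}.
Arguments sub_ev {T f mu}.

Theorem theorem53 (n : nat) (hn : (0 < n)%N) (Phi : state n -> state n)
  (mu : state n) (hfix : Phi mu = mu)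
  (alpha : nat -> state n) (t : nat -> R) (hrho : Pn alpha t) :
  (forall mu', (Wbar Phi mu mu' <-> Wbar_orbit Phi alpha t mu mu') /\
               (Wbar_orbit Phi alpha t mu mu' <-> Wbar_omega Phi alpha t mu mu')) /\
  (forall mu', (Wund Phi mu mu' <-> Wund_orbit Phi alpha t mu mu') /\
               (Wund_orbit Phi alpha t mu mu' <-> Wund_omega Phi alpha t mu mu')).
Proof.
  have Hom : forall x, omega Phi alpha t mu x <-> x = mu.
  { move=> x; split.
    - apply: (@ev_sub _ (Defs.orbit Phi alpha t mu)). exists 0%R => s _. exact (orbit_fix hfix _ _ _).
    - move=> ->. apply: (@ev_in _ (Defs.orbit Phi alpha t mu)). exists 0%R => s _.
      exact (orbit_fix hfix _ _ _). }
  have Ho : forall f : R -> state n,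
      (exists t0, forall s, (t0 <= s)%R -> f s = Defs.orbit Phi alpha t mu s) <->
      (exists t0, forall s, (t0 <= s)%R -> f s = mu).
  { move=> f. by split => -[t0 H]; exists t0 => s Hs; rewrite H // (orbit_fix hfix _ _ _). }
  have Heq : forall f : R -> state n,
      (forall x, omegaF f x <-> omega Phi alpha t mu x) <->
      (exists t0, forall s, (t0 <= s)%R -> f s = mu).
  { move=> f; split.
    - move=> H. apply: sub_ev => x /H. by rewrite Hom.
    - move=> H x. rewrite Hom. split; first exact: ev_sub.
      move=> ->. exact: ev_in. }
  split => mu'; split; split.
  - move=> [a [t' [HP H]]]. exists a, t'. split => //. apply/Ho. exact: sub_ev.
  - move=> [a [t' [HP H]]]. exists a, t'. split => //. apply: ev_sub. exact/Ho.
  - move=> [a [t' [HP H]]]. exists a, t'. split => //. apply/(Heq (Defs.orbit Phi a t' mu')).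
    exact/Ho.
  - move=> [a [t' [HP H]]]. exists a, t'. split => //. apply/Ho.
    exact/(Heq (Defs.orbit Phi a t' mu')).
  - move=> H a t' HP. apply/Ho. apply: sub_ev. exact: H.
  - move=> H a t' HP. apply: ev_sub. apply/Ho. exact: H.
  - move=> H a t' HP. apply/(Heq (Defs.orbit Phi a t' mu')). apply/Ho. exact: H.
  - move=> H a t' HP. apply/Ho. apply/(Heq (Defs.orbit Phi a t' mu')). exact: H.
Qed.
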